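(* There is an absolute constant $C>0$ such that for all scalars $\beta>0$ and $n\in\mathbb{N}$ there are vectors $\mathbf{a},\mathbf{u},\mathbf{q}\in\mathbb{R}^{2n+2}$ with $\psi_n(\beta t)=\mathbf{a}^\top[\mathbf{u}t+\mathbf{q}]_+$ for all $t\in\mathbb{R}$, $\mathbf{u}^\top\mathbf{q}=0$, $\|\mathbf{u}\|=1$, and $\|\mathbf{a}\|^2+\|\mathbf{q}\|^2\le C(n^4\beta^2+\beta^{-2})$.
   Context: The sawtooth $\psi_n:\mathbb{R}\to[-1,1]$ is $\psi_n(t)=-2n[t+1]_++2n[t-1]_++4n\sum_{j=1}^n\big((-1)^{j+n+1}[t-\tfrac{2j-1}{2n}]_++(-1)^{j+n}[t+\tfrac{2j-1}{2n}]_+\big)$; $[\cdot]_+$ is the entrywise ReLU. *)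

(* Defs.v *)
From mathcomp Require Import all_boot all_order all_algebra.
From mathcomp Require Import reals.
Set Implicit Arguments. Unset Strict Implicit. Unset Printing Implicit Defensive.
Import Order.TTheory GRing.Theory Num.Theory.
Local Open Scope ring_scope.

Definition relu {R : realType} (x : R) : R := Num.max x 0.

Definition relu_mx {R : realType} {m : nat} (v : 'cV[R]_m) : 'cV[R]_m :=
  map_mx relu v.

Definition sqnorm {R : realType} {m : nat} (v : 'cV[R]_m) : R :=
  \sum_(i < m) (v i 0) ^+ 2.

Definition psi {R : realType} (n : nat) (t : R) : R :=
  - (2 * n%:R) * relu (t + 1) + (2 * n%:R) * relu (t - 1)
  + (4 * n%:R) * \sum_(1 <= j < n.+1)
      ((-1) ^+ (j + n + 1) * relu (t - (2 * j - 1)%:R / (2 * n)%:R)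
       + (-1) ^+ (j + n) * relu (t + (2 * j - 1)%:R / (2 * n)%:R)).

(* Main.v *)
Require Import Defs.
From mathcomp Require Import all_boot all_order all_algebra.
From mathcomp Require Import reals.
From mathcomp Require Import ring lra zify.
Import Order.TTheory GRing.Theory Num.Theory.
Local Open Scope ring_scope.

Lemma sum_pairs (R : realType) (F : nat -> bool -> R) (m : nat) :
  \sum_(0 <= i < 2 * m) F i./2 (odd i) = \sum_(0 <= j < m) (F j false + F j true).
Proof.
elim: m => [|m IH]; first by rewrite !big_geq.
have -> : (2 * m.+1 = (2 * m).+2)%N by rewrite mulnS.
rewrite !big_nat_recr //= IH -addrA mul2n.
have h1 : (m.*2)./2 = m by exact: (half_bit_double m false).
have h2 : odd m.*2 = false by rewrite odd_double.
by rewrite h1 h2 uphalf_double.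
Qed.

Definition Bp (R : realType) (n j : nat) (e : bool) : R :=
  if j == 0%N then (if e then -1 else 1)
  else (if e then 1 else -1) * ((2 * j - 1)%:R / (2 * n)%:R).
Definition Cp (R : realType) (n j : nat) (e : bool) : R :=
  if j == 0%N then (if e then 2 * n%:R else - (2 * n%:R))
  else (if e then (-1) ^+ (j + n) else (-1) ^+ (j + n + 1)) * (4 * n%:R).

Lemma psi_sum (R : realType) (n : nat) (x : R) :
  psi n x = \sum_(0 <= i < 2 * n.+1) Cp R n i./2 (odd i) * relu (x + Bp R n i./2 (odd i)).
Proof.
rewrite (@sum_pairs R (fun j e => Cp R n j e * relu (x + Bp R n j e))).
rewrite big_nat_recl // /Cp /Bp /= /psi.
congr (_ + _).
rewrite big_add1 /= mulr_sumr; apply: eq_big_nat => j _.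
rewrite mulN1r mul1r mulrDr; congr (_ + _); rewrite mulrCA mulrA //.
Qed.

Lemma Cp_sq (R : realType) n j e : Cp R n j e ^+ 2 <= 16 * n%:R ^+ 2.
Proof.
rewrite /Cp; case: eqP => _.
  have h2 : 0 <= (n%:R : R) ^+ 2 by rewrite sqr_ge0.
  by case: e; rewrite ?sqrrN exprMn; lra.
have h2 : 0 <= (n%:R : R) ^+ 2 by rewrite sqr_ge0.
by case: e; rewrite exprMn sqrr_sign mul1r exprMn; lra.
Qed.

Lemma Bp_sq (R : realType) n j e : (j <= n)%N -> Bp R n j e ^+ 2 <= 1.
Proof.
move=> hj; rewrite /Bp; case: eqP => hj0.
  by case: e; rewrite ?sqrrN expr1n.
have hn : (0 < n)%N by apply: leq_trans hj; rewrite lt0n; apply/eqP.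
have h0 : 0 <= (2 * j - 1)%:R / (2 * n)%:R :> R by rewrite divr_ge0.
have h1 : (2 * j - 1)%:R / (2 * n)%:R <= 1 :> R.
  rewrite ler_pdivrMr ?ltr0n ?muln_gt0 // mul1r ler_nat.
  by apply: leq_trans (leq_subr _ _) _; rewrite leq_mul2l hj orbT.
by case: e; rewrite ?mulN1r ?mul1r ?sqrrN exprn_ile1.
Qed.

Lemma relu_scale (R : realType) (c y : R) : 0 <= c -> relu (c * y) = c * relu y.
Proof. by move=> hc; rewrite /relu maxr_pMr // mulr0. Qed.

Theorem lemma11 (R : realType) :
  exists C : R, 0 < C /\
  forall (beta : R) (n : nat), 0 < beta ->
  exists a u q : 'cV[R]_(2 * n + 2),
    (forall t : R, psi n (beta * t) = (a^T *m relu_mx (t *: u + q)) 0 0) /\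
    (u^T *m q) 0 0 = 0 /\
    sqnorm u = 1 /\
    sqnorm a + sqnorm q <= C * ((n%:R) ^+ 4 * beta ^+ 2 + beta ^-2).
Proof.
exists 256; split; first by [].
move=> beta n hb.
set N := (2 * n + 2)%N.
set s : R := Num.sqrt N%:R.
have hs : 0 < s by rewrite sqrtr_gt0 ltr0n /N addn2.
have hs2 : s ^+ 2 = N%:R by rewrite sqr_sqrtr // ler0n.
have hN : N = (2 * n.+1)%N by rewrite /N mulnS addnC.
exists (\col_(i < N) (Cp R n i./2 (odd i) * beta * s)).
exists (\col_(i < N) s^-1).
exists (\col_(i < N) (s^-1 * beta^-1 * Bp R n i./2 (odd i))).
split; [|split; [|split]].
- move=> t; rewrite psi_sum !mxE -hN (big_mkord xpredT) /=.
  apply: eq_bigr => i _; rewrite !mxE.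
  have -> : t * s^-1 + s^-1 * beta^-1 * Bp R n i./2 (odd i)
          = (s^-1 * beta^-1) * (beta * t + Bp R n i./2 (odd i)).
    by field; rewrite gt_eqF //= gt_eqF.
  rewrite relu_scale; last by rewrite mulr_ge0 // invr_ge0 ltW.
  rewrite mulrA; congr (_ * _); field; by rewrite gt_eqF //= gt_eqF.
- rewrite !mxE.
  have -> : \sum_(i < N) (\col_(i0 < N) s^-1)^T 0 i * (\col_(i0 < N) (s^-1 * beta^-1 * Bp R n i0./2 (odd i0))) i 0
     = s^-1 * s^-1 * beta^-1 * \sum_(i < N) Bp R n i./2 (odd i).
    by rewrite mulr_sumr; apply: eq_bigr => i _; rewrite !mxE !mulrA.
  rewrite -(big_mkord xpredT (fun i => Bp R n i./2 (odd i))) hN.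
  rewrite (@sum_pairs R (Bp R n)) big1 ?mulr0 // => j _.
  by rewrite /Bp; case: eqP => _; rewrite ?mulN1r ?mul1r ?subrr // addrC subrr.
- rewrite /sqnorm.
  under eq_bigr do rewrite mxE.
  rewrite sumr_const card_ord -mulr_natl -hs2 exprVn mulfV //.
  by rewrite expf_neq0 // gt_eqF.
- have hi : forall i : 'I_N, (i./2 <= n)%N.
    move=> i; rewrite leq_half_double; have := ltn_ord i; rewrite /N -mul2n; lia.
  have ha : sqnorm (\col_(i < N) (Cp R n i./2 (odd i) * beta * s))
      <= N%:R * (16 * n%:R ^+ 2 * beta ^+ 2 * N%:R).
    rewrite /sqnorm; under eq_bigr do rewrite mxE.
    rewrite [X in _ <= X]mulr_natl; have hc := card_ord N.
    rewrite -[X in _ <= _ *+ X]hc -sumr_const; apply: ler_sum => i _.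
    rewrite !exprMn hs2 ler_wpM2r ?ler0n // ler_wpM2r ?sqr_ge0 //.
    exact: Cp_sq.
  have hq : sqnorm (\col_(i < N) (s^-1 * beta^-1 * Bp R n i./2 (odd i)))
      <= N%:R * (N%:R^-1 * beta ^-2).
    rewrite /sqnorm; under eq_bigr do rewrite mxE.
    rewrite [X in _ <= X]mulr_natl; have hc := card_ord N.
    rewrite -[X in _ <= _ *+ X]hc -sumr_const; apply: ler_sum => i _.
    rewrite !exprMn !exprVn hs2 -[X in _ <= X]mulr1 ler_wpM2l ?Bp_sq //.
    by rewrite mulr_ge0 // invr_ge0 ?ler0n // exprn_ge0 // ltW.
  have hk : (N%:R * N%:R * n%:R ^+ 2 : R) <= 16 * n%:R ^+ 4.
    rewrite -!natrX -!natrM ler_nat /N.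
    nia.
  have hNN : N%:R * N%:R^-1 = 1 :> R by rewrite mulfV // pnatr_eq0 /N addn2.
  have hb2 : 0 <= beta ^+ 2 by rewrite sqr_ge0.
  have hbi : 0 <= beta ^- 2 by rewrite invr_ge0 sqr_ge0.
  have hkb := ler_wpM2r hb2 hk.
  rewrite mulrA hNN mul1r in hq.
  have e : N%:R * (16 * n%:R ^+ 2 * beta ^+ 2 * N%:R) = 16 * ((N%:R * N%:R * n%:R ^+ 2) * beta ^+ 2) :> R by ring.
  rewrite e in ha.
  nra.
Qed.
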